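(* Let $n\ge 3$, $d\ge 1$, and set $c=\frac{3.9d}{n+2}$. For every integer $r$ with $c<r<1.1c$, the number of counter-points $p\in[n]^d$ with $\tau_1(p)=r$ is at least \[\left(1-2de^{-d/(40000(n+2))}\right)\binom{d}{r}2^r(n-2)^{d-r}.\]
   Context: Let $[n]=\{1,\dots,n\}$. For $p\in[n]^d$ and $i\in[n]$ let $\pi_i(p)=|\{j\in[d]:p_j=i\}|$ and $\tau_1(p)=\pi_1(p)+\pi_n(p)$. A point $p\in[n]^d$ is a counter-point if $c<\tau_1(p)<1.1c$ and $\frac{0.99(d-\tau_1(p))}{n-2}\le\pi_i(p)\le\frac{1.01(d-\tau_1(p))}{n-2}$ for all $1<i<n$. *)

(* Defs.v *)
From HB Require Import structures.
From mathcomp Require Import all_boot all_order all_algebra.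
From mathcomp Require Import reals.
From mathcomp Require Import sequences exp.
Set Implicit Arguments. Unset Strict Implicit. Unset Printing Implicit Defensive.
Import Order.TTheory GRing.Theory Num.Theory.
Local Open Scope ring_scope.

(* A point p of [n]^d is a finite function 'I_d -> 'I_n; the value k : 'I_n
   stands for the element k+1 of [n] = {1,...,n}. *)
Definition point (n d : nat) := {ffun 'I_d -> 'I_n}.

Definition piv (n d : nat) (p : point n d) (i : nat) : nat :=
  #|[set j : 'I_d | ((p j).+1 == i)%N]|.

Definition tau1 (n d : nat) (p : point n d) : nat := (piv p 1 + piv p n)%N.

Definition cval (R : realType) (n d : nat) : R := (39 / 10 * d%:R) / (n%:R + 2).

Definition counter_point (R : realType) (n d : nat) (p : point n d) : bool :=
  [&& cval R n d < ((tau1 p)%:R : R),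
      ((tau1 p)%:R : R) < 11 / 10 * cval R n d &
      [forall i : 'I_n.+1, ((1 < i)%N && (i < n)%N) ==>
        ((99 / 100 * (d%:R - (tau1 p)%:R) / (n%:R - 2) <= ((piv p i)%:R : R))
         && (((piv p i)%:R : R) <= 101 / 100 * (d%:R - (tau1 p)%:R) / (n%:R - 2)))]].

(* Main.v *)
Require Import Defs.
From HB Require Import structures.
From mathcomp Require Import all_boot all_order all_algebra.
From mathcomp Require Import reals.
From mathcomp Require Import sequences exp.
From mathcomp Require Import zify ring lra.
Import Order.TTheory GRing.Theory Num.Theory.
Local Open Scope ring_scope.

Lemma sum_bool_card (I : finType) (P : pred I) :
  (\sum_(j : I) (P j : nat))%N = #|[set j | P j]|.
Proof.
rewrite -sum1_card [RHS]big_mkcond /=; apply: eq_bigr => j _.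
by rewrite inE; case: (P j).
Qed.

Lemma sum_ind (V : nmodType) (a n : nat) (c : V) : (a < n)%N ->
  \sum_(u < n) (if (u : nat) == a then c else 0) = c.
Proof.
move=> ha; rewrite (bigD1 (Ordinal ha)) //= eqxx big1 ?addr0 // => u hu.
rewrite ifN //; apply: contra hu => /eqP h; apply/eqP/val_inj => /=.
Qed.

Section GF.
Variable R : realType.

Lemma gf (n d r : nat) (v : 'I_n) (t : R) :
  (3 <= n)%N -> (0 < v)%N -> (v.+1 < n)%N -> (r <= d)%N ->
  \sum_(p : point n d | tau1 p == r) t ^+ piv p v.+1 =
  ('C(d, r) * 2 ^ r)%:R * (t + (n - 3)%:R) ^+ (d - r).
Proof.
move=> hn hv0 hv1 hrd.
pose w (u : 'I_n) : {poly R} :=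
  'X ^+ (u.+1 == 1)%N * 'X ^+ (u.+1 == n)%N * (t ^+ (u.+1 == v.+1)%N)%:P.
have hprod : forall p : point n d, \prod_j w (p j) =
   (t ^+ piv p v.+1) *: 'X ^+ tau1 p.
  move=> p; rewrite /w big_split big_split /= !prodrXr -rmorph_prod /= prodrXr.
  rewrite /tau1 /piv -!sum_bool_card exprD -mul_polyC mulrC; congr (_ * _).
have hsum : \sum_(u : 'I_n) w u = (t + (n - 3)%:R)%:P + 'X * 2%:R%:P.
  have hw : forall u : 'I_n, w u = 1 + (if (u : nat) == 0%N then 'X - 1 else 0)
     + (if (u : nat) == n.-1 then 'X - 1 else 0)
     + (if (u : nat) == v then (t - 1)%:P else 0).
    move=> u; rewrite /w !eqSS.
    have hn1 : (u.+1 == n) = ((u : nat) == n.-1).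
      by apply/eqP/eqP; lia.
    rewrite hn1.
    have [->|h0] := eqVneq (u : nat) 0%N.
      rewrite /= (_ : (0 == n.-1)%N = false); last by apply/negbTE; lia.
      rewrite (_ : (0 == v)%N = false); last by apply/negbTE; lia.
      by rewrite !expr0 expr1 mulr1 mulr1 addr0 addr0 addrC subrK.
    have [->|h1] := eqVneq (u : nat) n.-1.
      rewrite (_ : (n.-1 == v)%N = false); last by apply/negbTE; lia.
      by rewrite /= expr0 expr1 mul1r mulr1 !addr0 addrC subrK.
    case: ((u : nat) == v).
      by rewrite !expr0 !mul1r -[nat_of_bool true]/1%N expr1 !addr0 polyCB addrC subrK.
    by rewrite -[nat_of_bool false]/0%N !expr0 !mul1r !addr0.
  rewrite (eq_bigr _ (fun u _ => hw u)) !big_split.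
  rewrite /= !sum_ind; last 2 first.
  - by lia.
  - by lia.
  rewrite sumr_const card_ord polyCD polyCD polyCN natrB; last by lia.
  rewrite polyCB !rmorph_nat polyC1. ring.
  by [].
have key : \prod_(j : 'I_d) \sum_(u : 'I_n) w u =
    \sum_(p : {ffun 'I_d -> 'I_n}) \prod_j w (p j).
  exact: (bigA_distr_bigA (fun (j : 'I_d) (u : 'I_n) => w u)).
rewrite prodr_const card_ord hsum in key.
have := congr1 (fun q : {poly R} => q`_r) key.
rewrite (eq_bigr _ (fun p _ => hprod p)) coef_sumMXn.
rewrite exprDn.
have hterm : forall i : 'I_d.+1,
  (t + (n - 3)%:R)%:P ^+ (d - i) * ('X * 2%:R%:P) ^+ i *+ 'C(d, i) =
  (((t + (n - 3)%:R) ^+ (d - i) * 2%:R ^+ i) *+ 'C(d, i)) *: 'X^i.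
  move=> i; rewrite exprMn -!rmorphXn /= [_ * (_%:P)]mulrC mulrA -rmorphM /=.
  by rewrite mul_polyC -scalerMnl.
rewrite (eq_bigr _ (fun i _ => hterm i)) coef_sumMXn.
have hr : (r < d.+1)%N by lia.
rewrite (big_pred1 (Ordinal hr)); last by move=> i; rewrite /= -val_eqE.
move=> /= <-.
by rewrite -mulr_natl natrM natrX; ring.
Qed.

Lemma card_sum (T : finType) (P : pred T) :
  (#|[set p | P p]|%:R : R) = \sum_(p | P p) 1.
Proof.
rewrite -sum1_card natr_sum [LHS]big_mkcond [RHS]big_mkcond /=.
by apply: eq_bigr => p _; rewrite inE; case: (P p).
Qed.

Lemma tail (n d r : nat) (v : 'I_n) (s b : R) :
  (#|[set p : point n d | (tau1 p == r) && (b <= s * (piv p v.+1)%:R)]|)%:R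
    * expR b
  <= \sum_(p : point n d | tau1 p == r) (expR s) ^+ piv p v.+1.
Proof.
rewrite card_sum mulr_suml [leLHS]big_mkcond [leRHS]big_mkcond /=.
apply: ler_sum => p _.
case: (tau1 p == r) => /=; last by rewrite lexx.
case: ifP => h; last by rewrite exprn_ge0 // expR_ge0.
by rewrite mul1r -expRM_natr ler_expR.
Qed.

Lemma powbound (a k : R) (m : nat) : 0 < a -> 1 <= k ->
  (a + (k - 1)) ^+ m <= k ^+ m * expR (m%:R * ((a - 1) / k)).
Proof.
move=> ha hk.
have hk0 : 0 < k by lra.
have e : a + (k - 1) = k * (1 + (a - 1) / k).
  by field; rewrite gt_eqF.
rewrite e exprMn; apply: ler_wpM2l; first by rewrite exprn_ge0 // ltW.
rewrite expRM_natl; apply: lerXn2r.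
- rewrite nnegrE (_ : 1 + (a - 1) / k = (a + (k - 1)) / k); last first.
    by field; rewrite gt_eqF.
  by rewrite divr_ge0 // ?ltW //; lra.
- by rewrite nnegrE expR_ge0.
- exact: expR_ge1Dx.
Qed.

Lemma expR_up : expR (1 / 100 : R) <= 1 + 1006 / (100 * 1000).
Proof.
have e : (1 / 100 : R) = 10%:R * (1 / 1000) by rewrite -[10%:R]/(10 : R); lra.
rewrite e expRM_natl.
have h1 : expR (1 / 1000 : R) <= 1000 / 999.
  have h2 := expR_ge1Dx (- (1 / 1000 : R)).
  have h3 : expR (1 / 1000 : R) * expR (- (1 / 1000)) = 1.
    by rewrite -expRD addrN expR0.
  have h4 := expR_gt0 (1 / 1000 : R).
  rewrite ler_pdivlMr; last by lra.
  nra.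
apply: le_trans (_ : (1000 / 999 : R) ^+ 10 <= _); last first.
  rewrite !exprS expr0; lra.
apply: lerXn2r => //; rewrite nnegrE ?expR_ge0 //; lra.
Qed.

Lemma expR_lo : expR (- (1 / 100) : R) <= 1 - 994 / (100 * 1000).
Proof.
have e : (- (1 / 100) : R) = 10%:R * (- (1 / 1000)) by rewrite -[10%:R]/(10 : R); lra.
rewrite e expRM_natl.
have h1 : expR (- (1 / 1000) : R) <= 1000 / 1001.
  have h2 := expR_ge1Dx (1 / 1000 : R).
  have h3 : expR (1 / 1000 : R) * expR (- (1 / 1000)) = 1.
    by rewrite -expRD addrN expR0.
  have h4 := expR_gt0 (- (1 / 1000) : R).
  rewrite ler_pdivlMr; last by lra.
  nra.
apply: le_trans (_ : (1000 / 1001 : R) ^+ 10 <= _); last first.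
  rewrite !exprS expr0; lra.
apply: lerXn2r => //; rewrite nnegrE ?expR_ge0 //; lra.
Qed.

Lemma keyineq (N D rr k' : R) : 3 <= N -> 1 <= D -> 0 <= rr ->
  rr * (N + 2) < 11 / 10 * (39 / 10 * D) -> k' <= - (4 / (100 * 1000)) ->
  (D - rr) * (k' / (N - 2)) <= - (D / (4 * 10 ^+ 4 * (N + 2))).
Proof.
move=> hN hD hr hrN hk.
have hpoly : (D - rr) * k' * (4 * 10 ^+ 4 * (N + 2)) <= - D * (N - 2).
  have hY : D * (N - 229 / 100) <= (D - rr) * (N + 2) by lra.
  have hY0 : 0 <= (D - rr) * (N + 2) by nra.
  have e : (D - rr) * k' * (4 * 10 ^+ 4 * (N + 2)) =
     ((D - rr) * (N + 2)) * (k' * (4 * 10 ^+ 4)) by ring.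
  rewrite e.
  have hk2 : k' * (4 * 10 ^+ 4) <= - (16 / 10) by lra.
  have := ler_wpM2l hY0 hk2.
  nra.
have e1 : (D - rr) * (k' / (N - 2)) =
  ((D - rr) * k' * (4 * 10 ^+ 4 * (N + 2))) / ((N - 2) * (4 * 10 ^+ 4 * (N + 2))).
  field; apply/andP; split; rewrite ?mulf_neq0 //; try (apply/negP => /eqP; lra);
  by rewrite expf_neq0.
have e2 : - (D / (4 * 10 ^+ 4 * (N + 2))) =
  (- D * (N - 2)) / ((N - 2) * (4 * 10 ^+ 4 * (N + 2))).
  field; apply/andP; split; rewrite ?mulf_neq0 //; try (apply/negP => /eqP; lra);
  by rewrite expf_neq0.
rewrite e1 e2; apply: ler_wpM2r => //.
rewrite invr_ge0 mulr_ge0 //; first lra.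
rewrite mulr_ge0 //; first by rewrite mulr_ge0 // exprn_ge0.
lra.
Qed.

Lemma bound_from_tail (c K x b X : R) : c * expR b <= K * expR x ->
  x - b <= - X -> 0 <= K -> c <= expR (- X) * K.
Proof.
move=> h hx hK.
have -> : c = c * expR b * expR (- b) by rewrite -mulrA -expRD addrN expR0 mulr1.
apply: le_trans (ler_wpM2r (expR_ge0 _) h) _.
rewrite -mulrA -expRD mulrC; apply: ler_wpM2r => //.
by rewrite ler_expR.
Qed.


Lemma mid_count (n : nat) : (3 <= n)%N ->
  \sum_(v < n | (0 < v)%N && (v.+1 < n)%N) (1 : R) = (n - 2)%:R.
Proof.
move=> hn.
have hall : \sum_(v < n) (1 : R) = n%:R by rewrite sumr_const card_ord.
rewrite (bigID (fun v : 'I_n => (0 < v)%N && (v.+1 < n)%N)) /= in hall.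
have hc : \sum_(v < n | ~~ ((0 < v)%N && (v.+1 < n)%N)) (1 : R) = 2.
  rewrite big_mkcond /= (eq_bigr (fun v : 'I_n => (if (v : nat) == 0%N then (1:R) else 0)
     + (if (v : nat) == n.-1 then 1 else 0))).
    rewrite big_split /= !sum_ind //; lia.
  move=> v _.
  have hv := ltn_ord v.
  have [h0|h0] := eqVneq (v : nat) 0%N.
    rewrite h0 /= (_ : (0 == n.-1)%N = false) ?addr0 //; by apply/negbTE; lia.
  have [h1|h1] := eqVneq (v : nat) n.-1.
    rewrite h1 /= (_ : (n.-1.+1 < n)%N = false) ?andbF; last by apply/negbTE; lia.
    by rewrite add0r.
  have -> : ((0 < v)%N && (v.+1 < n)%N) = true by apply/andP; split; lia.
  by rewrite addr0.
have e : \sum_(v < n | (0 < v)%N && (v.+1 < n)%N) (1 : R)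
   + \sum_(v < n | ~~ ((0 < v)%N && (v.+1 < n)%N)) (1 : R) = n%:R := hall.
rewrite hc in e; rewrite natrB; last by lia.
lra.
Qed.

End GF.

Theorem lemma22 (R : realType) (n d r : nat) :
  (3 <= n)%N -> (1 <= d)%N ->
  cval R n d < r%:R -> r%:R < 11 / 10 * cval R n d ->
  ((1 : R) - 2 * d%:R * expR (- (d%:R / (4 * 10 ^+ 4 * (n%:R + 2))))) *
    ('C(d, r) * 2 ^ r * (n - 2) ^ (d - r))%:R
  <= (#|[set p : point n d | counter_point R p && (tau1 p == r)]|)%:R.
Proof.
move=> hn hd hc1 hc2.
have hN : (3 : R) <= n%:R by rewrite ler_nat.
have hD : (1 : R) <= d%:R by rewrite -[1 : R]/(1%:R) ler_nat.
have hr0 : (0 : R) <= r%:R by rewrite ler0n.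
have hP : (0 : R) < n%:R + 2 by lra.
have hrN : r%:R * (n%:R + 2) < 11 / 10 * (39 / 10 * d%:R) :> R.
  by move: hc2; rewrite /cval mulrA ltr_pdivlMr.
have hrd : (r < d)%N.
  rewrite -(ltr_nat R); nra.
have hrdR : (d - r)%:R = d%:R - r%:R :> R by rewrite natrB // ltnW.
have hn2R : (n - 2)%:R = n%:R - 2 :> R by rewrite natrB //; lia.
have hn3R : (n - 3)%:R = (n - 2)%:R - 1 :> R by rewrite hn2R natrB //; lra.
set X := d%:R / (4 * 10 ^+ 4 * (n%:R + 2)) : R.
set E := expR (- X).
set K := ('C(d, r) * 2 ^ r * (n - 2) ^ (d - r))%:R : R.
have hK0 : 0 <= K by rewrite ler0n.
have hE0 : 0 <= E by rewrite expR_ge0.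
have hKe : K = ('C(d, r) * 2 ^ r)%:R * (n - 2)%:R ^+ (d - r) by rewrite /K natrM natrX.
pose midp (v : 'I_n) := (0 < v)%N && (v.+1 < n)%N.
have hS : (#|[set p : point n d | tau1 p == r]|%:R : R) = K.
  rewrite card_sum.
  have h1n : (1 < n)%N by lia.
  have := @gf R n d r (Ordinal h1n) 1 hn isT (ltac:(simpl; lia)) (ltnW hrd).
  rewrite (eq_bigr (fun _ => 1)); last by move=> p _; rewrite expr1n.
  move=> ->; rewrite hKe hn3R; congr (_ * _ ^+ _); lra.
have hHi : forall v : 'I_n, midp v ->
  (#|[set p : point n d | (tau1 p == r) && ((1 / 100 : R) * (101 / 100 * (d%:R - r%:R) / (n%:R - 2)) <= 1 / 100 * (piv p v.+1)%:R)]|%:R : R) <= E * K.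
  move=> v; rewrite /midp => /andP [hv0 hv1].
  apply: (@bound_from_tail R _ _ ((d - r)%:R * ((expR (1 / 100) - 1) / (n - 2)%:R))).
  - apply: le_trans (@tail R n d r v _ _) _.
    rewrite gf //; last exact: ltnW.
    rewrite hKe -mulrA; apply: ler_wpM2l; first by rewrite ler0n.
    rewrite hn3R; apply: powbound; first exact: expR_gt0.
    rewrite hn2R; lra.
  - rewrite hrdR hn2R.
    have e : (d%:R - r%:R) * ((expR (1 / 100) - 1) / (n%:R - 2)) -
      1 / 100 * (101 / 100 * (d%:R - r%:R) / (n%:R - 2)) =
      (d%:R - r%:R) * ((expR (1 / 100) - 1 - 101 / 10000) / (n%:R - 2)) :> R.
      by field; apply/negP => /eqP; lra.
    rewrite e; apply: keyineq => //.
    have := @expR_up R; lra.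
  - exact: hK0.
have hLo : forall v : 'I_n, midp v ->
  (#|[set p : point n d | (tau1 p == r) && (- (1 / 100 : R) * (99 / 100 * (d%:R - r%:R) / (n%:R - 2)) <= - (1 / 100) * (piv p v.+1)%:R)]|%:R : R) <= E * K.
  move=> v; rewrite /midp => /andP [hv0 hv1].
  apply: (@bound_from_tail R _ _ ((d - r)%:R * ((expR (- (1 / 100)) - 1) / (n - 2)%:R))).
  - apply: le_trans (@tail R n d r v _ _) _.
    rewrite gf //; last exact: ltnW.
    rewrite hKe -mulrA; apply: ler_wpM2l; first by rewrite ler0n.
    rewrite hn3R; apply: powbound; first exact: expR_gt0.
    rewrite hn2R; lra.
  - rewrite hrdR hn2R.
    have e : (d%:R - r%:R) * ((expR (- (1 / 100)) - 1) / (n%:R - 2)) -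
      - (1 / 100) * (99 / 100 * (d%:R - r%:R) / (n%:R - 2)) =
      (d%:R - r%:R) * ((expR (- (1 / 100)) - 1 + 99 / 10000) / (n%:R - 2)) :> R.
      by field; apply/negP => /eqP; lra.
    rewrite e; apply: keyineq => //.
    have := @expR_lo R; lra.
  - exact: hK0.
set Hi := fun v : 'I_n => [set p : point n d | (tau1 p == r) && ((1 / 100 : R) * (101 / 100 * (d%:R - r%:R) / (n%:R - 2)) <= 1 / 100 * (piv p v.+1)%:R)].
set Lo := fun v : 'I_n => [set p : point n d | (tau1 p == r) && (- (1 / 100 : R) * (99 / 100 * (d%:R - r%:R) / (n%:R - 2)) <= - (1 / 100) * (piv p v.+1)%:R)].
set Good := [set p : point n d | counter_point R p && (tau1 p == r)].
have hsub : [set p : point n d | tau1 p == r] \subset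
    Good :|: \bigcup_(v | midp v) (Hi v :|: Lo v).
  apply/subsetP => p; rewrite inE => /eqP hp.
  case hcp : (counter_point R p).
    by rewrite inE; apply/orP; left; rewrite inE hcp hp eqxx.
  rewrite inE; apply/orP; right; apply/bigcupP.
  move: hcp; rewrite /counter_point hp hc1 hc2 !andTb => /negbT/forallPn [i].
  rewrite negb_imply => /andP [/andP [hi1 hi2] hbad].
  have hiv : (i.-1 < n)%N by exact: leq_ltn_trans (leq_pred i) hi2.
  have hi0 : (0 < i)%N by exact: ltnW hi1.
  exists (Ordinal hiv).
    by rewrite /midp /= prednK // hi2 andbT ltn_predRL.
  have hpi : piv p i = piv p (Ordinal hiv).+1 by rewrite /= prednK.
  rewrite hpi in hbad.
  rewrite !inE hp eqxx !andTb.
  move: hbad.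
  set pv := ((piv p (Ordinal hiv).+1)%:R : R).
  set lo := 99 / 100 * (d%:R - r%:R) / (n%:R - 2) : R.
  set hi := 101 / 100 * (d%:R - r%:R) / (n%:R - 2) : R.
  have h100 : (0 : R) <= 1 / 100 by rewrite divr_ge0 ?ler01 ?ler0n.
  rewrite negb_and -!ltNge => /orP [h|h]; apply/orP; [right|left].
    by rewrite !mulNr lerN2 ler_wpM2l // ltW.
  by rewrite ler_wpM2l // ltW.
have hUnat : (#|[set p : point n d | tau1 p == r]| <=
   #|Good| + \sum_(v | midp v) (#|Hi v| + #|Lo v|))%N.
  apply: leq_trans (subset_leq_card hsub) _.
  rewrite cardsU; apply: leq_trans (leq_subr _ _) _.
  rewrite leq_add2l; apply: leq_trans (unstable.card_big_setU _ _ _) _.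
  apply: leq_sum => v _; rewrite cardsU; exact: leq_subr.
have hU : (#|[set p : point n d | tau1 p == r]|%:R : R) <=
   #|Good|%:R + \sum_(v | midp v) (#|Hi v|%:R + #|Lo v|%:R).
  move: hUnat; rewrite -(ler_nat R) natrD natr_sum.
  by under eq_bigr do rewrite natrD.
have hsum : \sum_(v | midp v) ((#|Hi v|%:R : R) + #|Lo v|%:R) <=
    (n - 2)%:R * (2 * (E * K)).
  rewrite -(@mid_count R n hn) mulr_suml; apply: ler_sum => v hv.
  have := hHi v hv; have := hLo v hv; lra.
rewrite hS in hU.
have hG : K - (n - 2)%:R * (2 * (E * K)) <= #|Good|%:R by lra.
case: (leqP (n - 2) d) => hnd.
  have hnd' : (n - 2)%:R <= d%:R :> R by rewrite ler_nat.
  have h0 : (0:R) <= d%:R - (n - 2)%:R by rewrite subr_ge0.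
  have := mulr_ge0 (mulr_ge0 h0 hE0) hK0.
  nra.
have hX : X <= 1 / 2.
  rewrite /X ler_pdivrMr; last by rewrite mulr_gt0 // mulr_gt0 // exprn_gt0.
  have : d%:R < (n - 2)%:R :> R by rewrite ltr_nat.
  rewrite hn2R; lra.
have hE : 1 / 2 <= E by have := expR_ge1Dx (- X); rewrite /E; lra.
have h1 : (1 - 2 * d%:R * E) <= 0 by nra.
apply: le_trans (_ : 0 <= _); last by rewrite ler0n.
by rewrite mulr_le0_ge0.
Qed.
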